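(* For every integer $t\ge1$, $s(3t,3t,3t-2)=3$.
   Context: A placement delivery array $S$-PDA$(F,K,Z)$ is an $F\times K$ array $R=(r_{j,k})$, $1\le j\le F$, $1\le k\le K$, over a finite set $S$ such that: (1) each cell is either empty or contains an element of $S$; (2) each column contains exactly $Z$ empty cells; (3) each element of $S$ occurs at most once in each row and at most once in each column; (4) if two distinct nonempty cells satisfy $r_{j_1,k_1}=r_{j_2,k_2}=t\in S$, then the cells $r_{j_1,k_2}$ and $r_{j_2,k_1}$ are empty. For integers $F,K\ge1$, $0\le Z\le F$, define $s(F,K,Z)=\min\{|S| : \text{there exists an } S\text{-PDA}(F,K,Z)\}$. *)

(* Defs.v *)
From mathcomp Require Import all_boot.
Set Implicit Arguments. Unset Strict Implicit. Unset Printing Implicit Defensive.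

(* A placement delivery array S-PDA(F,K,Z) over a symbol set S of size n,
   where S is represented by 'I_n.  Cells: None = empty, Some s = symbol s.
   Rows indexed by 'I_F, columns by 'I_K. *)
Definition is_PDA (F K Z n : nat) (R : 'I_F -> 'I_K -> option 'I_n) : Prop :=
  (forall k : 'I_K, #|[set j : 'I_F | R j k == None]| = Z) /\
  (forall (j : 'I_F) (k1 k2 : 'I_K) (s : 'I_n),
      R j k1 = Some s -> R j k2 = Some s -> k1 = k2) /\
  (forall (j1 j2 : 'I_F) (k : 'I_K) (s : 'I_n),
      R j1 k = Some s -> R j2 k = Some s -> j1 = j2) /\
  (forall (j1 j2 : 'I_F) (k1 k2 : 'I_K) (s : 'I_n),
      (j1, k1) <> (j2, k2) -> R j1 k1 = Some s -> R j2 k2 = Some s ->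
      R j1 k2 = None /\ R j2 k1 = None).

(* s(F,K,Z) = m : m is the minimum size of a symbol set admitting an S-PDA(F,K,Z) *)
Definition pda_min (F K Z m : nat) : Prop :=
  (exists R : 'I_F -> 'I_K -> option 'I_m, is_PDA Z R) /\
  (forall (n : nat) (R : 'I_F -> 'I_K -> option 'I_n), is_PDA Z R -> m <= n).

(* Main.v *)
Require Import Defs.
From mathcomp Require Import all_boot.
From mathcomp Require Import zify.

Definition Rc t (j k : 'I_(3*t)) : option 'I_3 :=
  if (j %/ 3 == k %/ 3) && (j != k) then Some (inord ((j %% 3 + k %% 3) %% 3)) else None.

Lemma RcE t j k s : Rc t j k = Some s ->
  [/\ j %/ 3 = k %/ 3, (j:nat) <> k & (s:nat) = (j %% 3 + k %% 3) %% 3].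
Proof.
rewrite /Rc; case: ifP => // /andP [/eqP E1 E2] [<-].
rewrite inordK; last by apply: ltn_pmod.
split => //; by move=> E; move/eqP: E2; apply; apply: val_inj.
Qed.

Lemma RcNone t (j k : 'I_(3*t)) : (j %/ 3 <> k %/ 3 \/ (j:nat) = k) -> Rc t j k = None.
Proof.
move=> H; rewrite /Rc; case: ifP => // /andP [/eqP E1 E2]; exfalso.
case: H => // E; move/eqP: E2; apply; exact: val_inj.
Qed.


Lemma constr t : 0 < t -> is_PDA (3*t-2) (Rc t).
Proof.
move=> t0; split; [|split; [|split]].
- move=> k.
  have k3 := ltn_ord k.
  have hx : 3 * (k %/ 3) + (k %% 3 + 1) %% 3 < 3 * t by lia.
  have hy : 3 * (k %/ 3) + (k %% 3 + 2) %% 3 < 3 * t by lia.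
  pose x := Ordinal hx; pose y := Ordinal hy.
  have -> : [set j | Rc t j k == None] = ~: [set x; y].
    apply/setP => j; rewrite !inE /Rc.
    have -> : (j == x) || (j == y) = (j %/ 3 == k %/ 3) && (j != k).
      apply/idP/idP.
        case/orP => /eqP ->; apply/andP; split; apply/eqP => //=; try lia.
        by move=> E; have := f_equal (@nat_of_ord _) E => /=; lia.
        by move=> E; have := f_equal (@nat_of_ord _) E => /=; lia.
      case/andP => /eqP E1 E2.
      have E2' : (j:nat) <> k by move=> E; move/eqP: E2; apply; apply: ord_inj.
      have : (j:nat) = x \/ (j:nat) = y by rewrite /=; lia.
      by case=> E; apply/orP; [left|right]; apply/eqP; apply: ord_inj.
    by case: ifP.
  have := cardsC [set x; y]; rewrite cards2 card_ord.
  have -> : (x != y) = true.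
    apply/eqP => E; have := f_equal (@nat_of_ord _) E => /=; lia.
  lia.
- move=> j k1 k2 s /RcE [? ? ?] /RcE [? ? ?]; apply: ord_inj; lia.
- move=> j1 j2 k s /RcE [? ? ?] /RcE [? ? ?]; apply: ord_inj; lia.
- move=> j1 j2 k1 k2 s neq /RcE [? ? ?] /RcE [? ? ?].
  have nn : ~ ((j1:nat) = j2 /\ (k1:nat) = k2).
    by move=> [E1 E2]; apply: neq; congr pair; apply: ord_inj.
  split; apply: RcNone; lia.
Qed.
Lemma lower F Z n (R : 'I_F -> 'I_F -> option 'I_n) :
  0 < F -> Z + 2 = F -> is_PDA Z R -> 3 <= n.
Proof.
move=> F0 HZ [Hcol [Hrow [Hcolu H4]]].
rewrite leqNgt; apply/negP => Hn.
have two k : exists x y a b, [/\ x != y, R x k = Some a, R y k = Some b & a != b].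
  have C2 : #|~: [set j | R j k == None]| == 2.
    have := cardsC [set j | R j k == None]; rewrite Hcol card_ord => E.
    apply/eqP; lia.
  move/cards2P: C2 => [x [y [xy E]]].
  have : x \in ~: [set j | R j k == None] by rewrite E !inE eqxx.
  have : y \in ~: [set j | R j k == None] by rewrite E !inE eqxx orbT.
  rewrite !inE; case Ey: (R y k) => [b|] //; case Ex: (R x k) => [a|] // _ _.
  exists x, y, a, b; split => //; apply/eqP => ab; subst b.
  by move/eqP: xy; apply; apply: (Hcolu x y k a).
have [x0 [y0 [a [b [xy0 Ha Hb ab]]]]] := two (Ordinal F0).
have inab (c : 'I_n) : c = a \/ c = b.
  have := ltn_ord a; have := ltn_ord b; have := ltn_ord c.
  move/eqP: ab => ab.
  have ab' : (a:nat) <> (b:nat) by move=> E; apply: ab; apply: val_inj.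
  move=> *.
  have : (c:nat) = a \/ (c:nat) = b by lia.
  by case=> E; [left|right]; apply: val_inj.
have hasa k : exists j, R j k = Some a.
  have [x [y [a' [b' [_ Hx Hy ab']]]]] := two k.
  case: (inab a') => Ea'; first by exists x; rewrite Hx Ea'.
  case: (inab b') => Eb'; first by exists y; rewrite Hy Eb'.
  by move/eqP: ab'; rewrite Ea' Eb'.
pose r k := odflt x0 [pick j | R j k == Some a].
have Hr k : R (r k) k = Some a.
  rewrite /r; case: pickP => [j /eqP //| H]; exfalso.
  by have [j Hj] := hasa k; move: (H j); rewrite Hj eqxx.
have rinj : injective r.
  by move=> k1 k2 E; apply: (Hrow (r k1) k1 k2 a); [apply: Hr | rewrite E; apply: Hr].
have [g _ rg] := injF_bij rinj.
have Hk := Hr (g y0); rewrite rg in Hk.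
have neq : (x0, Ordinal F0) <> (y0, g y0).
  by case=> E _; move/eqP: xy0; apply.
have [_ Hn2] := H4 _ _ _ _ _ neq Ha Hk.
by rewrite Hn2 in Hb.
Qed.

Theorem mainTheorem18 (t : nat) : 1 <= t -> pda_min (3 * t) (3 * t) (3 * t - 2) 3.
Proof.
move=> t1; split.
  by exists (Rc t); apply: constr.
move=> n R H; apply: (@lower _ _ _ R _ _ H).
  by rewrite muln_gt0.
rewrite subnK //; exact: leq_trans _ (leq_pmulr 3 t1).
Qed.
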